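(* For every $\Delta, m \in \mathbb{Z}_{>0}$, we have \[ h(\Delta,m) \leq h(1,m) + (\Delta-1)\cdot h_s^{\Delta}(m). \] In particular, $h(\Delta,m) \leq h(1,m) + (\Delta-1)\cdot h_s(m)$.
   Context: For a real matrix $A \in \mathbb{R}^{m\times n}$ and $1 \le k \le \min\{m,n\}$, let $\Delta_k(A)$ denote the maximum of $|\det(B)|$ over all $k\times k$ submatrices $B$ of $A$. A matrix is called totally $1$-submodular if every square submatrix (of every size) has determinant of absolute value at most $1$. The generalized Heller constant $h(\Delta,m)$ is the maximum $n$ such that some $A \in \mathbb{Z}^{m\times n}$ with pairwise distinct columns has $\Delta_m(A)=\Delta$. For $t \in \mathbb{R}^m$ and $A\in\mathbb{R}^{m\times n}$ with columns $A_1,\dots,A_n$, $t+A$ denotes the matrix with columns $t+A_1,\dots,t+A_n$. The shifted Heller constant $h_s(m)$ is the maximum $n$ such that there exist $t \in [0,1)^m\setminus\{\mathbf 0\}$ and $A \in \{-1,0,1\}^{m\times n}$ with pairwise distinct columns such that $t+A$ is totally $1$-submodular. For an integer $\delta \ge 2$, the refined shifted Heller constant $h_s^{\delta}(m)$ is defined in the same way but with $t$ restricted to $[0,1)^m \cap (\tfrac{1}{\delta}\mathbb{Z})^m \setminus\{\mathbf 0\}$. (When $\Delta = 1$ the second summand has coefficient $\Delta-1=0$ and is interpreted as $0$.) *)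

(* Defs.v *)
From HB Require Import structures.
From mathcomp Require Import all_boot all_order all_algebra.
From mathcomp Require Import Rstruct.
From Stdlib Require Rdefinitions.
Notation R := Rdefinitions.R.
Set Implicit Arguments. Unset Strict Implicit. Unset Printing Implicit Defensive.
Import Order.TTheory GRing.Theory Num.Theory.
Local Open Scope ring_scope.

Definition distinct_cols (T : Type) (m n : nat) (A : 'M[T]_(m, n)) : Prop :=
  forall j1 j2 : 'I_n, col j1 A = col j2 A -> j1 = j2.

(* Delta_k(A) = D for an integer matrix, with k = m (all rows):
   the maximum of |det B| over all m x m submatrices B (choice of m distinct
   columns) equals D.  This presupposes that such a submatrix exists
   (i.e. m <= n), as Delta_m is only defined for m <= min(m,n). *)
Definition Delta_full_eq (m n : nat) (A : 'M[int]_(m, n)) (D : int) : Prop :=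
  (exists g : 'I_m -> 'I_n, injective g /\ `|\det (colsub g A)| = D) /\
  (forall g : 'I_m -> 'I_n, injective g -> `|\det (colsub g A)| <= D).

Definition totally_1_submodular (F : numDomainType) (m n : nat)
    (B : 'M[F]_(m, n)) : Prop :=
  forall (k : nat) (f : 'I_k -> 'I_m) (g : 'I_k -> 'I_n),
    injective f -> injective g -> `|\det (mxsub f g B)| <= 1.

Definition shift_mx (m n : nat) (t : 'cV[R]_m) (A : 'M[int]_(m, n)) : 'M[R]_(m, n) :=
  \matrix_(i, j) (t i 0 + (A i j)%:~R).

Definition entries_pm1 (m n : nat) (A : 'M[int]_(m, n)) : Prop :=
  forall i j, A i j \in [:: -1; 0; 1].

Definition in_unit_box (m : nat) (t : 'cV[R]_m) : Prop :=
  (forall i, 0 <= t i 0 /\ t i 0 < 1) /\ t != 0.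

(* n is admissible for h(D, m): some A in Z^{m x n} with pairwise distinct
   columns and Delta_m(A) = D.  h(D,m) is the maximum of such n. *)
Definition heller_adm (D m n : nat) : Prop :=
  exists A : 'M[int]_(m, n), distinct_cols A /\ Delta_full_eq A D%:Z.

(* n is admissible for h_s(m); h_s(m) is the maximum of such n. *)
Definition shifted_adm (m n : nat) : Prop :=
  exists (t : 'cV[R]_m) (A : 'M[int]_(m, n)),
    in_unit_box t /\ entries_pm1 A /\ distinct_cols A /\
    totally_1_submodular (shift_mx t A).

(* n is admissible for h_s^delta(m) (delta >= 2): as above, with
   t in (1/delta) Z^m; h_s^delta(m) is the maximum of such n. *)
Definition refined_shifted_adm (delta m n : nat) : Prop :=
  (2 <= delta)%N /\
  exists (t : 'cV[R]_m) (A : 'M[int]_(m, n)),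
    in_unit_box t /\
    (forall i, exists z : int, t i 0 = z%:~R / delta%:R) /\
    entries_pm1 A /\ distinct_cols A /\
    totally_1_submodular (shift_mx t A).

(* Main.v *)
Require Import Defs.
From HB Require Import structures.
From mathcomp Require Import all_boot all_order all_algebra.
From mathcomp Require Import Rstruct.
From mathcomp Require Import zify ring lra fingroup perm.
Import Order.TTheory GRing.Theory Num.Theory.
Local Open Scope ring_scope.

Lemma minor_bound m n (Y : 'M[int]_(m,n)) (c : int) (g0 : 'I_m -> 'I_n) :
  c != 0 ->
  (forall i r, Y i (g0 r) = c * (i == r)%:R) ->
  (forall g : 'I_m -> 'I_n, injective g -> `|\det (colsub g Y)| <= `|c| ^+ m) ->
  forall k (f : 'I_k -> 'I_m) (g : 'I_k -> 'I_n), injective f -> injective g ->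
    `|\det (mxsub f g Y)| <= `|c| ^+ k.
Proof.
move=> c0 Hc Hm.
suff H : forall d k (f : 'I_k -> 'I_m) (g : 'I_k -> 'I_n), (m - k)%N = d ->
    injective f -> injective g -> `|\det (mxsub f g Y)| <= `|c| ^+ k.
  by move=> k f g; exact: H.
elim=> [|d IH] k f g Hd injf injg.
  have km : k = m.
    have := leq_card f injf; rewrite !card_ord; lia.
  subst k.
  have -> : mxsub f g Y = row_perm (perm injf) (colsub g Y).
    by apply/matrixP => i j; rewrite !mxE permE.
  rewrite row_permE det_mulmx det_perm normrM normrX normrN1 expr1n mul1r.
  exact: Hm.
have km : (k < m)%N by lia.
have [r rf] : exists r, r \notin codom f.
  case: (pickP [pred r | r \notin codom f]) => [r /= rf| H]; first by exists r.
  have : (#|'I_m| <= #|codom f|)%N.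
    apply/subset_leq_card/subsetP => r _; move: (H r) => /= /negbFE //.
  rewrite card_codom // !card_ord; lia.
have fr : forall a, f a != r.
  by move=> a; apply: contraNneq rf => <-; exact: codom_f.
case: (boolP (g0 r \in codom g)) => [/codomP [c1 Hc1]| gr].
  rewrite (expand_det_col _ c1) big1 ?normr0 ?exprn_ge0 ?normr_ge0 // => i _.
  by rewrite !mxE -Hc1 Hc (negbTE (fr _)) mulr0 mul0r.
pose f' (i : 'I_(k + 1)) := match split i with inl a => f a | inr _ => r end.
pose g' (i : 'I_(k + 1)) := match split i with inl a => g a | inr _ => g0 r end.
have injf' : injective f'.
  move=> i i'; rewrite /f' -[i]splitK -[i']splitK.
  case: (split i) => a; case: (split i') => b; rewrite !unsplitK.
  - by move/injf ->.
  - by move=> E; move: (fr a); rewrite E eqxx.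
  - by move=> E; move: (fr b); rewrite E eqxx.
  - by rewrite !ord1.
have injg' : injective g'.
  move=> i i'; rewrite /g' -[i]splitK -[i']splitK.
  case: (split i) => a; case: (split i') => b; rewrite !unsplitK.
  - by move/injg ->.
  - by move=> E; move: gr; rewrite -E codom_f.
  - by move=> E; move: gr; rewrite E codom_f.
  - by rewrite !ord1.
have Hb : mxsub f' g' Y =
    block_mx (mxsub f g Y) 0 (\matrix_(i < 1, j < k) Y r (g j)) (c%:M).
  apply/matrixP => i j; rewrite -[i]splitK -[j]splitK.
  case: (split i) => a; case: (split j) => b;
    rewrite /block_mx !mxE /f' /g' !unsplitK !mxE ?unsplitK ?mxE //=.
  - by rewrite Hc (negbTE (fr _)) mulr0.
  - by rewrite Hc !ord1 eqxx mulr1n mulr1.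
have := IH (k + 1)%N f' g' ltac:(lia) injf' injg'.
rewrite Hb det_lblock det_scalar expr1 normrM exprD expr1.
rewrite ler_pM2r // normr_gt0 //.
Qed.

Lemma res_lt (x : int) (D : nat) : (0 < D)%N -> (absz (x %% D%:Z)%Z < D)%N.
Proof.
move=> D0. have h1 := modz_ge0 x (d := D%:Z) ltac:(lia).
have h2 := ltz_pmod x (d := D%:Z) ltac:(lia). lia.
Qed.

Section Asm.
Variables (m n D : nat) (Y : 'M[int]_(m,n)) (g0 : 'I_m -> 'I_n).
Hypotheses (D2 : (2 <= D)%N) (m0 : (0 < m)%N)
  (HY1 : forall i r, Y i (g0 r) = D%:Z * (i == r)%:R)
  (HY3 : forall k (f : 'I_k -> 'I_m) (g : 'I_k -> 'I_n), injective f -> injective g ->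
          `|\det (mxsub f g Y)| <= (D%:Z) ^+ k)
  (HY4 : forall j j', col j Y = col j' Y -> j = j')
  (T : finType) (P : {set T}) (psi : 'I_n -> T) (HP : (#|P| <= D)%N)
  (Hpsi : forall j, psi j \in P)
  (Hres : forall j j', psi j = psi j' -> forall i, (Y i j %% D%:Z)%Z = (Y i j' %% D%:Z)%Z).

Lemma D0 : (0 < D)%N. Proof. have := D2; lia. Qed.
Lemma Dz0 : (0 < D%:Z). Proof. have := D2; lia. Qed.

Definition tcls (j : 'I_n) : {ffun 'I_m -> 'I_D} :=
  [ffun i => Ordinal (@res_lt (Y i j) D D0)].
Definition z0 : {ffun 'I_m -> 'I_D} := [ffun _ => Ordinal D0].
Definition Sc c := [set j | tcls j == c].
Definition hc c : 'I_#|Sc c| -> 'I_n := enum_val.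
Definition Zc c : 'M[int]_(m, #|Sc c|) := \matrix_(i, k) (Y i (hc c k) %/ D%:Z)%Z.

Lemma F1 c k i : Y i (hc c k) = Zc c i k * D%:Z + ((c i : nat)%:Z).
Proof.
rewrite !mxE.
have : hc c k \in Sc c by exact: enum_valP.
move: (hc c k) => j; rewrite inE => /eqP <-; rewrite ffunE /=.
rewrite gez0_abs; first exact: divz_eq.
by apply: modz_ge0; lia.
Qed.

Lemma Y_le1 i j : `|Y i j| <= D%:Z.
Proof.
have := @HY3 1%N (fun _ => i) (fun _ => j).
rewrite det_mx11 !mxE expr1; apply => x y _; by rewrite !ord1.
Qed.

Lemma F2 c : distinct_cols (Zc c).
Proof.
move=> k k' /matrixP H.
apply: enum_val_inj; apply: HY4; apply/matrixP => i z.
rewrite !mxE (F1 c k i) (F1 c k' i).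
by have := H i 0; rewrite !mxE => ->.
Qed.


Lemma refined_c c : c != z0 -> refined_shifted_adm D m #|Sc c|.
Proof.
move=> cne; split=> //.
pose t : 'cV[R]_m := \col_i (((c i : nat)%:Z)%:~R / (D%:R : R)).
have DR : 0 < (D%:R : R) by rewrite ltr0n D0.
exists t, (Zc c); split; [|split; [|split; [|split]]].
- split.
    move=> i; rewrite mxE; split.
      by rewrite divr_ge0 // ler0n.
    by rewrite ltr_pdivrMr // mul1r ltr_nat.
  apply/negP => /eqP /matrixP Ht; apply: (negP cne); apply/eqP/ffunP => i.
  have := Ht i 0; rewrite !mxE ffunE => /eqP; rewrite mulf_eq0 invr_eq0.
  rewrite (gt_eqF DR) orbF intr_eq0 => /eqP ci.
  by apply/val_inj => /=; case: ci.
- by move=> i; exists (c i : nat)%:Z; rewrite mxE.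
- move=> i k; have := F1 c k i; have := Y_le1 i (hc c k); have := ltn_ord (c i).
  set q := Zc c i k; set y := Y i (hc c k) => h1 h2 h3.
  have : q = -1 \/ q = 0 \/ q = 1 by nia.
  by rewrite !inE => [[->|[->|->]]].
- exact: F2.
move=> k f g injf injg.
have E : mxsub f g (shift_mx t (Zc c)) =
    (D%:R : R)^-1 *: map_mx (intr : int -> R) (mxsub f (hc c \o g) Y).
  have E1 : forall i kk, (shift_mx t (Zc c)) i kk = (Y i (hc c kk))%:~R / D%:R.
    move=> i kk; rewrite (F1 c kk i) /shift_mx !mxE intrD intrM.
    by field; rewrite gt_eqF.
  apply/matrixP => i j; rewrite [LHS]mxE E1 !mxE /=.
  by rewrite mulrC.
rewrite E detZ det_map_mx normrM normrX normfV normr_nat exprVn.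
rewrite mulrC ler_pdivrMr ?exprn_gt0 // mul1r -intr_norm.
have := HY3 _ _ _ injf (inj_comp (@enum_val_inj _ _) injg).
by rewrite -(ler_int R) rmorphXn.
Qed.

Lemma g0_inj : injective g0.
Proof.
move=> r r' E; have := HY1 r r; rewrite E HY1 eqxx.
have Dn0 : D%:Z != 0 by rewrite gt_eqF // Dz0.
move/(mulfI Dn0)/eqP; rewrite eqr_nat; by case: (r =P r').
Qed.

Lemma tcls_g0 r : tcls (g0 r) = z0.
Proof.
apply/ffunP => i; apply/val_inj; rewrite !ffunE /= HY1 mulrC modzMl //.
Qed.

Lemma integral_part : heller_adm 1 m #|Sc z0|.
Proof.
have Hg0 : forall r, g0 r \in Sc z0 by move=> r; rewrite inE tcls_g0.
have F1z : forall k i, Y i (hc z0 k) = Zc z0 i k * D%:Z.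
  by move=> k i; rewrite (F1 z0 k i) ffunE /= addr0.
exists (Zc z0); split; first exact: F2.
split.
  pose r0 : 'I_m := Ordinal m0.
  pose g := fun r => enum_rank_in (Hg0 r0) (g0 r).
  have hg : forall r, hc z0 (g r) = g0 r by move=> r; rewrite /hc /g enum_rankK_in.
  exists g; split.
    by move=> r r' /(congr1 (hc z0)); rewrite !hg => /g0_inj.
  have -> : colsub g (Zc z0) = 1%:M.
    apply/matrixP => i r; rewrite !mxE hg HY1 mulKz; last by rewrite gt_eqF // Dz0.
    by [].
  by rewrite det1 normr1.
move=> g injg.
have := HY3 _ _ _ (@inj_id _) (inj_comp (@enum_val_inj _ _) injg).
have -> : mxsub id (hc z0 \o g) Y = (D%:Z) *: colsub g (Zc z0).
  by apply/matrixP => i r; rewrite !mxE /= {1}F1z mulrC mxE.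
rewrite detZ normrM normrX gtr0_norm ?Dz0 // -[X in _ <= X]mulr1 ler_pM2l //.
by rewrite exprn_gt0 // Dz0.
Qed.

Definition n2 := \max_(c in [pred c | c != z0]) #|Sc c|.

Lemma count_bound : (n <= #|Sc z0| + (D - 1) * n2)%N.
Proof.
set I := [set tcls j | j in 'I_n].
have HI : (#|I| <= D)%N.
  pose F x := if [pick j | psi j == x] is Some j then tcls j else z0.
  have tF : forall j, tcls j = F (psi j).
    move=> j; rewrite /F; case: pickP => [j' /eqP E | H]; last by move: (H j); rewrite eqxx.
    apply/ffunP => i; apply/val_inj; rewrite !ffunE /=.
    by rewrite (Hres _ _ E i).
  have -> : I = [set F x | x in [set psi j | j in 'I_n]].
    apply/setP => c; apply/imsetP/imsetP => [[j _ ->]|[x /imsetP [j _ ->] ->]].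
      by exists (psi j); [apply: imset_f | exact: tF].
    by exists j => //; rewrite tF.
  apply: leq_trans (leq_imset_card _ _) _; apply: leq_trans HP.
  by apply: subset_leq_card; apply/subsetP => x /imsetP [j _ ->]; exact: Hpsi.
have z0I : z0 \in I by apply/imsetP; exists (g0 (Ordinal m0)) => //; rewrite tcls_g0.
have Hn : n = (\sum_(c : {ffun 'I_m -> 'I_D}) #|Sc c|)%N.
  rewrite -[n in LHS]card_ord -sum1_card (partition_big tcls predT) //=.
  by apply: eq_bigr => c _; rewrite sum1_card cardsE.
rewrite [X in (X <= _)%N]Hn (bigD1 z0) //= leq_add2l.
apply: (@leq_trans (\sum_(c | c != z0) (if c \in I then n2 else 0))%N).
  apply: leq_sum => c cz; case: ifP => cI.
    by apply: (@leq_bigmax_cond _ [pred c | c != z0] (fun c => #|Sc c|)).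
  have -> : Sc c = set0.
    apply/setP => j; rewrite inE in_set0; apply/negbTE; apply: contraFN cI => /eqP <-.
    exact: imset_f.
  by rewrite cards0.
rewrite -big_mkcondr /= sum_nat_const leq_mul2r; apply/orP; right.
have := cardsD1 z0 I; rewrite z0I.
have -> : #|[pred c | (c != z0) && (c \in I)]| = #|I :\ z0|.
  by apply: eq_card => c; rewrite !inE.
lia.
Qed.

Lemma assembly : exists n1 n2, heller_adm 1 m n1 /\ refined_shifted_adm D m n2 /\
  (n <= n1 + (D - 1) * n2)%N.
Proof.
exists #|Sc z0|, n2; split; first exact: integral_part.
split; last exact: count_bound.
pose c1 : {ffun 'I_m -> 'I_D} := [ffun _ => Ordinal D2].
have c1z : c1 != z0.
  apply/eqP => /ffunP /(_ (Ordinal m0)); rewrite !ffunE => /(congr1 val) //.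
have ne : (0 < #|[pred c | c != z0]|)%N by apply/card_gt0P; exists c1.
rewrite /n2; have [c cz ->] := eq_bigmax_cond (fun c => #|Sc c|) ne.
exact: refined_c.
Qed.

End Asm.

Lemma card_box m D (a : 'I_m -> nat) : (forall i, a i <= D)%N ->
  #|[set f : {ffun 'I_m -> 'I_D} | [forall i, (f i < a i)%N]]| = (\prod_i a i)%N.
Proof.
move=> aD.
have := card_family (fun i : 'I_m => [pred k : 'I_D | (k < a i)%N]).
rewrite foldrE big_map => H.
transitivity (\prod_(i <- enum 'I_m) #|[pred k : 'I_D | (k < a i)%N]|)%N; last first.
  rewrite big_enum /=.
  apply: eq_bigr => i _.
  have wi : injective (widen_ord (aD i)) by move=> x y /(congr1 val) H'; exact: val_inj.
  rewrite -[RHS]card_ord -(card_imset _ wi).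
  apply: eq_card => k; rewrite inE /=; apply/idP/imsetP => [kl|[j _ ->]] //=.
  by exists (Ordinal kl) => //; apply/val_inj.
rewrite -H; apply: eq_card => f; rewrite inE; apply/forallP/familyP => //=.
Qed.

Lemma unit_int_norm (x : int) : x \is a GRing.unit -> `|x| = 1.
Proof. by case/orP => /eqP ->. Qed.

Lemma smith_count m n (A : 'M[int]_(m,n)) (B : 'M[int]_m) (D : nat) (s : int) :
  (0 < D)%N -> `|\det B| = D%:Z -> s * \det B = D%:Z ->
  exists (T : finType) (P : {set T}) (psi : 'I_n -> T),
    (#|P| <= D)%N /\ (forall j, psi j \in P) /\
    forall j j', psi j = psi j' -> forall i,
      ((s *: (\adj B *m A)) i j %% D%:Z)%Z = ((s *: (\adj B *m A)) i j' %% D%:Z)%Z.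
Proof.
move=> D0 nB sB.
have [L uL [R uR [d _ EB]]] := int_Smith_normal_form B.
set Dg := \matrix_(i, j) _ in EB.
have Dgd : Dg = diag_mx (\row_i d`_i).
  by apply/matrixP => i j; rewrite !mxE.
pose a (i : 'I_m) := absz d`_i.
have uL' : \det L \is a GRing.unit by rewrite -unitmxE.
have uR' : \det R \is a GRing.unit by rewrite -unitmxE.
have prodA : (\prod_i a i)%N = D.
  have := nB; rewrite EB !det_mulmx Dgd det_diag !normrM.
  rewrite (unit_int_norm _ uL') (unit_int_norm _ uR') mul1r mulr1 normr_prod.
  move=> H; apply/eqP; rewrite -eqz_nat -H -[X in X == _]natz natr_prod.
  by apply/eqP/eq_bigr => i _; rewrite mxE natz abszE.

have aD : forall i, (0 < a i)%N && (a i <= D)%N.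
  move=> i; have : (0 < \prod_j a j)%N by rewrite prodA.
  rewrite -prodA (bigD1 i) //= muln_gt0 => /andP [h1 h2].
  by rewrite h1 leq_pmulr.
pose u := invmx L *m A.
have ult : forall i j, (absz (u i j %% d`_i)%Z < D)%N.
  move=> i j; case/andP: (aD i) => h1 h2.
  have dn0 : d`_i != 0 by rewrite -absz_gt0.
  have := ltz_mod (u i j) dn0; have := modz_ge0 (u i j) dn0.
  rewrite /a in h1 h2; lia.
pose psi j : {ffun 'I_m -> 'I_D} := [ffun i => Ordinal (ult i j)].
exists _, [set f : {ffun 'I_m -> 'I_D} | [forall i, (f i < a i)%N]], psi.
split.
  by rewrite card_box ?prodA // => i; case/andP: (aD i).
split.
  move=> j; rewrite inE; apply/forallP => i; rewrite ffunE /=.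
  case/andP: (aD i) => h1 h2.
  have dn0 : d`_i != 0 by rewrite -absz_gt0.
  have := modz_ge0 (u i j) dn0.
  have := ltz_mod (u i j) dn0.
  rewrite /a in h1 h2 *; lia.
move=> j j' Epsi i.
have Hu : forall k, (d`_k %| u k j - u k j')%Z.
  move=> k; rewrite -eqz_mod_dvd.
  have := congr1 (fun f : {ffun 'I_m -> 'I_D} => val (f k)) Epsi; rewrite /= !ffunE /= => H.
  case/andP: (aD k) => h1 h2.
  have dn0 : d`_k != 0 by rewrite -absz_gt0.
  have := modz_ge0 (u k j) dn0; have := modz_ge0 (u k j') dn0.
  move=> h3 h4; apply/eqP; lia.
pose e : 'M[int]_(n,1) := delta_mx j 0 - delta_mx j' 0.
have due : forall k, (u *m e) k 0 = u k j - u k j'.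
  by move=> k; rewrite mulmxBr -!colE !mxE.
pose w : 'cV[int]_m := \col_k ((u k j - u k j') %/ d`_k)%Z.
have Dw : Dg *m w = u *m e.
  have Hw : forall k : 'I_m, d`_k * w k 0 = u k j - u k j'.
    by move=> k; rewrite [w k 0]mxE mulrC divzK //; exact: Hu.
  apply/matrixP => k z; rewrite ord1 Dgd mul_diag_mx due -Hw mxE.
  by congr (_ * _); rewrite mxE.
have Ae : A *m e = B *m (invmx R *m w).
  rewrite EB -!mulmxA mulKVmx // Dw /u -mulmxA mulKVmx //.
have Ye : (s *: (\adj B *m A)) *m e = D%:Z *: (invmx R *m w).
  rewrite -scalemxAl -mulmxA Ae mulmxA mul_adj_mx mul_scalar_mx scalerA sB //.
move: Ye; move: (s *: (\adj B *m A)) (invmx R *m w) => Y V Ye.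
move: (congr1 (fun M : 'M[int]_(m,1) => M i 0) Ye); rewrite mulmxBr -!colE !mxE => H.
have -> : Y i j = V i 0 * D%:Z + Y i j' by rewrite mulrC -H; ring.
by rewrite modzMDl.
Qed.

Lemma reduce m n D (A : 'M[int]_(m,n)) : (2 <= D)%N -> (0 < m)%N ->
  distinct_cols A -> Delta_full_eq A D%:Z ->
  exists n1 n2, heller_adm 1 m n1 /\ refined_shifted_adm D m n2 /\
    (n <= n1 + (D - 1) * n2)%N.
Proof.
move=> D2 m0 dA [[g0 [g0inj detg0]] Hall].
have Dz0 : 0 < D%:Z by lia.
have Dn0 : D%:Z != 0 by rewrite gt_eqF.
set B := colsub g0 A.
pose s := Num.sg (\det B).
have sB : s * \det B = D%:Z by rewrite /s -normrEsg detg0.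
have dB0 : \det B != 0 by rewrite -normr_eq0 detg0.
have [T [P [psi [HP [Hpsi Hres]]]]] := @smith_count _ _ A B D s (ltnW D2) detg0 sB.
have [Y EY] : exists Y, Y = s *: (\adj B *m A) by eexists.
rewrite -EY in Hres.
have CY : forall g : 'I_m -> 'I_n, colsub g Y = s *: (\adj B *m colsub g A).
  move=> g; rewrite EY; apply/matrixP => i r; rewrite !mxE.
  by apply: congr1; apply: eq_bigr => x _; rewrite [colsub g A x r]mxE.
have HY1 : forall i r, Y i (g0 r) = D%:Z * (i == r)%:R.
  move=> i r.
  have := congr1 (fun M : 'M[int]_m => M i r) (CY g0).
  rewrite -/B (mul_adj_mx B) scale_scalar_mx (_ : s * \det B = D%:Z) // /= !mxE => ->.
  by rewrite mulr_natr.
have adjB : `|\det (\adj B)| * D%:Z = D%:Z ^+ m.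
  have := congr1 (fun M : 'M[int]_m => `|\det M|) (mul_adj_mx B).
  by rewrite /= det_mulmx det_scalar normrM normrX detg0.
have HY2 : forall g : 'I_m -> 'I_n, injective g ->
    `|\det (colsub g Y)| <= `|D%:Z| ^+ m.
  move=> g injg; rewrite CY detZ det_mulmx !normrM normrX normr_sg dB0 expr1n mul1r.
  rewrite (ger0_norm (ltW Dz0)) -adjB ler_wpM2l //.
  exact: Hall.
have HY3 := @minor_bound _ _ Y _ g0 Dn0 HY1 HY2.
rewrite (ger0_norm (ltW Dz0)) in HY3.
have BY : B *m Y = D%:Z *: A.
  by rewrite EY -scalemxAr mulmxA mul_mx_adj mul_scalar_mx scalerA (_ : s * \det B = D%:Z).
have HY4 : forall j j', col j Y = col j' Y -> j = j'.
  move=> j j' E; apply: dA; apply/matrixP => i z.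
  have : col j (B *m Y) = col j' (B *m Y) by rewrite !colE -!mulmxA -!colE E.
  rewrite BY => /matrixP /(_ i z); rewrite !mxE => /(mulfI Dn0).
  done.
exact: (@assembly m n D Y g0 D2 m0 HY1 HY3 HY4 T P psi HP Hpsi Hres).
Qed.

Theorem lemma2p3 (D m : nat) :
  (0 < D)%N -> (0 < m)%N ->
  (forall n, heller_adm D m n ->
     exists n1 n2, heller_adm 1 m n1 /\
       (D = 1%N \/ refined_shifted_adm D m n2) /\
       (n <= n1 + (D - 1) * n2)%N) /\
  (forall n, heller_adm D m n ->
     exists n1 n2, heller_adm 1 m n1 /\
       (D = 1%N \/ shifted_adm m n2) /\
       (n <= n1 + (D - 1) * n2)%N).
Proof.
move=> D0 m0.
have part1 : forall n, heller_adm D m n -> exists n1 n2, heller_adm 1 m n1 /\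
    (D = 1%N \/ refined_shifted_adm D m n2) /\ (n <= n1 + (D - 1) * n2)%N.
  move=> n [A [dA HA]].
  case: (ltnP 1 D) => D2.
    have [n1 [n2 [h1 [h2 h3]]]] := @reduce m n D A D2 m0 dA HA.
    by exists n1, n2; split => //; split => //; right.
  have D1 : D = 1%N by lia.
  subst D.
  exists n, 0%N; split; first by exists A.
  by split; [left | rewrite muln0 addn0].
split => // n Hn.
have [n1 [n2 [h1 [[h2|h2] h3]]]] := part1 n Hn; exists n1, n2; split => //; split => //.
  by left.
right; case: h2 => _ [t [A [h4 [_ h5]]]].
by exists t, A.
Qed.
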